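(* Let $t$ be a positive integer and let $M_1,M_2$ be matroids on a finite set $E$ such that $M_2$ is a quotient of $M_1$, and let $\rho=r_{M_1}+r_{M_2}$. Then $r(M_1)-r(M_2)\le t$ if and only if the polymatroid $\rho$ does not have the (rank function of the) uniform matroid $U_{t+1,t+1}$ as a minor.
   Context: A polymatroid on $E$ is a function $\rho:2^E\to\mathbb{Z}$ that is normalized, non-decreasing and submodular; matroid rank functions are polymatroids. For matroids $Q,L$ on $E$, $Q$ is a quotient of $L$ if there is a matroid $M$ and $A\subseteq E(M)$ with $L=M\backslash A$ and $Q=M/A$. Polymatroid minors: $\rho_{\backslash A}(X)=\rho(X)$, $\rho_{/A}(X)=\rho(X\cup A)-\rho(A)$ for $X\subseteq E-A$; minors are $(\rho_{\backslash A})_{/B}$ for disjoint $A,B\subseteq E$ (up to isomorphism). $U_{t+1,t+1}$ is the free matroid on $t+1$ elements, whose rank function is $X\mapsto|X|$. *)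

(* Defs.v *)
From mathcomp Require Import all_boot all_order all_algebra.
Set Implicit Arguments. Unset Strict Implicit. Unset Printing Implicit Defensive.
Import GRing.Theory Num.Theory.
Local Open Scope ring_scope.

Definition is_matroid_rank (E : finType) (r : {set E} -> nat) : Prop :=
  [/\ (forall X : {set E}, (r X <= #|X|)%N),
      (forall X Y : {set E}, X \subset Y -> (r X <= r Y)%N) &
      (forall X Y : {set E}, (r (X :|: Y) + r (X :&: Y) <= r X + r Y)%N)].

Definition is_polymatroid (E : finType) (rho : {set E} -> int) : Prop :=
  [/\ rho set0 = 0,
      (forall X Y : {set E}, X \subset Y -> rho X <= rho Y) &
      (forall X Y : {set E}, rho (X :|: Y) + rho (X :&: Y) <= rho X + rho Y)].

(* Q is a quotient of L (both matroids on E): there is a matroid M on a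
   ground set E(M) = E ⊔ A (modelled as the sum type E + T, A = inr-part)
   with L = M \ A and Q = M / A. *)
Definition is_quotient (E : finType) (rQ rL : {set E} -> nat) : Prop :=
  exists (T : finType) (rM : {set (E + T)%type} -> nat),
    [/\ is_matroid_rank rM,
        (forall X : {set E}, rL X = rM (inl @: X)) &
        (forall X : {set E},
            rQ X = (rM (inl @: X :|: inr @: [set: T]) - rM (inr @: [set: T]))%N)].

(* rho has a minor (rho \ A) / B (A, B disjoint subsets of E) that is
   isomorphic to the polymatroid sigma on 'I_n, via a bijection
   f : 'I_n -> E - (A ∪ B).  Deletion does not change values, and
   (rho\A)/B (X) = rho (X ∪ B) - rho B. *)
Definition has_minor_iso (E : finType) (rho : {set E} -> int) (n : nat)
    (sigma : {set 'I_n} -> int) : Prop :=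
  exists (A B : {set E}) (f : 'I_n -> E),
    [/\ [disjoint A & B],
        injective f,
        (forall i, f i \notin A :|: B),
        (forall e, e \notin A :|: B -> exists i, f i = e) &
        (forall X : {set 'I_n}, rho (f @: X :|: B) - rho B = sigma X)].

Definition free_rank (n : nat) : {set 'I_n} -> int := fun X => (#|X|%:Z).

(* Main.v *)
Require Import Defs.
From mathcomp Require Import all_boot all_order all_algebra.
From mathcomp Require Import zify.
Import GRing.Theory Num.Theory.
Set Implicit Arguments. Unset Strict Implicit.
Local Open Scope ring_scope.

Section Aux.
Variable E : finType.
Implicit Types (r : {set E} -> nat).

Lemma rank0 r : is_matroid_rank r -> r set0 = 0%N.
Proof. case=> h _ _; apply/eqP; rewrite -leqn0; by have:= h set0; rewrite cards0. Qed.

Lemma closure_lem r S : is_matroid_rank r -> forall Y : {set E},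
  (forall e, e \in Y -> (r (e |: S) <= r S)%N) -> (r (Y :|: S) <= r S)%N.
Proof.
case=> _ mono sub Y.
elim: {Y}#|Y| {-2}Y (erefl #|Y|) => [|n IH] Y hY hyp.
  move/eqP: hY; rewrite cards_eq0 => /eqP ->; by rewrite set0U.
have [e eY] : exists e, e \in Y.
  by apply/set0Pn; rewrite -card_gt0 hY.
have hY' : #|Y :\ e| = n by move: hY; rewrite (cardsD1 e Y) eY => -[].
have IH' := IH (Y :\ e) hY' (fun x hx => hyp x (subsetP (subsetDl Y [set e]) x hx)).
have := sub ((Y :\ e) :|: S) (e |: S).
have -> : (Y :\ e) :|: S :|: (e |: S) = Y :|: S.
  apply/setP=> x; rewrite !inE; case: (x =P e) => [->|_] /=; rewrite ?eY ?orbT //=.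
  by case: (x \in Y); case: (x \in S).
have hS : S \subset ((Y :\ e) :|: S) :&: (e |: S).
  by rewrite subsetI subsetUr subsetUr.
have := mono _ _ hS.
have := hyp e eY.
lia.
Qed.

Lemma indep_sub r (S X : {set E}) : is_matroid_rank r -> r S = #|S| -> X \subset S -> r X = #|X|.
Proof.
move=> [bd mono sub] rS XS.
have := sub X (S :\: X).
have -> : X :|: (S :\: X) = S.
  apply/setP=> x; rewrite !inE; case xX: (x \in X) => //=.
  by rewrite (subsetP XS x xX).
have -> : X :&: (S :\: X) = set0.
  by apply/setP=> x; rewrite !inE; case: (x \in X); rewrite ?andbF.
have h1 := bd X. have h2 := bd (S :\: X).
have := cardsD S X. have -> : S :&: X = X by apply/setIidPr.
have := subset_leq_card XS.
lia.
Qed.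

Lemma max_indep r B : is_matroid_rank r -> r B = #|B| ->
  exists S : {set E}, [/\ B \subset S, r S = #|S| & r setT = r S].
Proof.
move=> m rB; have m' := m; case: m' => bd mono sub.
have PB : (B \subset B) && (r B == #|B|) by rewrite subxx rB eqxx.
case: (@arg_maxnP _ B (fun S : {set E} => (B \subset S) && (r S == #|S|)) (fun S : {set E} => #|S|) PB) => S /andP[BS /eqP rS] maxS.
exists S; split => //.
apply/eqP; rewrite eqn_leq (mono _ _ (subsetT S)) andbT.
have := @closure_lem r S m setT.
rewrite setTU; apply=> e _.
case eS: (e \in S); first by rewrite (setUidPr _) // sub1set.
have ce : #|e |: S| = #|S|.+1 by rewrite cardsU1 eS.
have := bd (e |: S); rewrite ce leq_eqVlt ltnS => /orP[/eqP he|]; last by rewrite rS.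
have := maxS (e |: S); rewrite /= he ce eqxx andbT.
rewrite (subset_trans BS (subsetUr _ _)) => /(_ isT). by rewrite ltnn.
Qed.

Lemma inl_in (T : finType) a (Y : {set E}) : ((inl a : (E + T)%type) \in inl @: Y) = (a \in Y).
Proof. apply/imsetP/idP => [[b bY [->]]|aY] //; by exists a. Qed.
Lemma inr_in_inl (T : finType) b (Y : {set E}) : ((inr b : (E + T)%type) \in inl @: Y) = false.
Proof. by apply/imsetP => -[]. Qed.
Lemma inl_in_inr (T : finType) a (Z : {set T}) : ((inl a : (E + T)%type) \in inr @: Z) = false.
Proof. by apply/imsetP => -[]. Qed.
Lemma inr_in (T : finType) b (Z : {set T}) : ((inr b : (E + T)%type) \in inr @: Z) = (b \in Z).
Proof. apply/imsetP/idP => [[c cZ [->]]|bZ] //; by exists b. Qed.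

Lemma quot_mono r1 r2 : is_quotient r2 r1 ->
  forall X Y : {set E}, X \subset Y -> (r2 Y + r1 X <= r1 Y + r2 X)%N.
Proof.
case=> T [rM [[_ mono sub] h1 h2]] X Y XY. rewrite !h1 !h2.
set A := inr @: [set: T].
have := sub (inl @: Y) (inl @: X :|: A).
have -> : inl @: Y :|: (inl @: X :|: A) = inl @: Y :|: A.
  apply/setP=> -[a|b]; rewrite !inE ?inl_in ?inr_in_inl ?inl_in_inr //.
  by case aX: (a \in X); rewrite ?(subsetP XY a aX) ?orbF.
have -> : inl @: Y :&: (inl @: X :|: A) = inl @: X.
  apply/setP=> -[a|b]; rewrite !inE ?inl_in ?inr_in_inl ?inl_in_inr ?orbF //.
  by case aX: (a \in X); rewrite ?(subsetP XY a aX) ?andbF.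
have m1 := mono A (inl @: Y :|: A) (subsetUr _ _).
have m2 := mono A (inl @: X :|: A) (subsetUr _ _).
lia.
Qed.

End Aux.

Theorem theorem5p4 (E : finType) (t : nat) (r1 r2 : {set E} -> nat) :
  (0 < t)%N ->
  is_matroid_rank r1 -> is_matroid_rank r2 ->
  is_quotient r2 r1 ->
  ((r1 [set: E])%:Z - (r2 [set: E])%:Z <= t%:Z <->
   ~ @has_minor_iso E (fun X : {set E} => ((r1 X + r2 X)%N)%:Z) t.+1 (@free_rank t.+1)).
Proof.
move=> _ m1 m2 q.
have Q := quot_mono q.
have r10 := rank0 m1; have r20 := rank0 m2.
have Q1 X : (r2 X <= r1 X)%N by have := Q set0 X (sub0set X); rewrite r10 r20; lia.
have m1' := m1; have m2' := m2.
case: m1' => bd1 mono1 sub1; case: m2' => bd2 mono2 sub2.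
split.
- move=> hle [A [B [f [dAB finj fnot fsurj hval]]]].
  set C := f @: [set: 'I_t.+1].
  have step : forall e, e \in C -> (r2 (e |: B) <= r2 B)%N.
    move=> e /imsetP [i _ ->].
    have := hval [set i]; rewrite /free_rank cards1 imset_set1 /= => h.
    have := Q B (f i |: B) (subsetUr _ _).
    have := mono1 B (f i |: B) (subsetUr _ _).
    lia.
  have hC := closure_lem m2 step.
  have := hval setT; rewrite /free_rank cardsT card_ord /= -/C => h.
  have := Q (C :|: B) setT (subsetT _).
  have := Q1 B.
  have := mono2 B (C :|: B) (subsetUr _ _).
  lia.
- move=> hnot; apply: contra_notT hnot => hgt.
  have hgt' : (r2 setT + t < r1 setT)%N by lia.
  have h0 : r2 set0 = #|@set0 E| by rewrite r20 cards0.
  have [B0 [_ rB sB]] := max_indep m2 h0.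
  have r1B : r1 B0 = #|B0| by have := Q1 B0; have := bd1 B0; lia.
  have [S [BS rS sS]] := max_indep m1 r1B.
  have hcard : (t.+1 <= #|S :\: B0|)%N.
    have := cardsD S B0. have -> : S :&: B0 = B0 by apply/setIidPr.
    have := subset_leq_card BS. lia.
  pose f := fun i : 'I_t.+1 => enum_val (widen_ord hcard i).
  have finj : injective f.
    move=> i j /enum_val_inj /(congr1 val) /= h; exact: val_inj.
  have fin i : f i \in S :\: B0 by apply: enum_valP.
  set C := f @: [set: 'I_t.+1].
  exists (~: (B0 :|: C)), B0, f; split => //.
  + by rewrite disjoints_subset setCS subsetUl.
  + move=> i; have fC : f i \in C := imset_f f (in_setT i).
    have := fin i; rewrite !inE fC orbT /= => /andP[/negbTE -> _] //.
  + move=> e; rewrite !inE negb_or negbK => /andP[/orP[eB|eC] eB'].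
      by rewrite eB in eB'.
    by case/imsetP: eC => i _ ->; exists i.
  + move=> X /=.
    have XS : f @: X :|: B0 \subset S.
      rewrite subUset BS andbT; apply/subsetP => x /imsetP [i _ ->].
      by have := fin i; rewrite inE => /andP[].
    have h1 := indep_sub m1 rS XS.
    have hI : f @: X :&: B0 = set0.
      apply/setP => x; rewrite !inE; apply/negbTE; apply/andP => -[/imsetP [i _ ->]].
      by have := fin i; rewrite inE => /andP[/negbTE ->].
    have := cardsU (f @: X) B0; rewrite hI cards0 (card_imset _ finj) => hc.
    have := mono2 B0 (f @: X :|: B0) (subsetUr _ _).
    have := mono2 (f @: X :|: B0) setT (subsetT _).
    rewrite /free_rank. move=> ha hb; have e2 : r2 ([set f x | x in X] :|: B0) = r2 B0 by apply/eqP; rewrite eqn_leq hb andbT -sB.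
    rewrite e2 h1 hc r1B subn0. by rewrite -addnA PoszD addrK.
Qed.
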